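(* Suppose $\psi\in\mathcal{B}$ is pseudoconcave on a neighbourhood of $+\infty$. Then there exists a concave function $\psi_{0}:(0,\infty)\to(0,\infty)$ such that $\psi/\psi_{0}$ and $\psi_{0}/\psi$ are bounded on $(\varepsilon,\infty)$ for every $\varepsilon>0$.
   Context: $\mathcal{B}$ is the set of Borel measurable $\psi:(0,\infty)\to(0,\infty)$ bounded on each compact $[a,b]\subset(0,\infty)$ and such that $1/\psi$ is bounded on each $[r,\infty)$, $r>0$. A function $\psi:(0,\infty)\to(0,\infty)$ is pseudoconcave on $(r,\infty)$ ($r\geq0$) if there is a concave $\psi_{1}:(r,\infty)\to(0,\infty)$ with $\psi/\psi_{1}$ and $\psi_{1}/\psi$ bounded on $(r,\infty)$; it is pseudoconcave on a neighbourhood of $+\infty$ if it is pseudoconcave on $(r,\infty)$ for some sufficiently large $r$. *)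

(* Defs.v *)
From HB Require Import structures.
From mathcomp Require Import all_boot all_order all_algebra.
From mathcomp Require Import all_classical all_reals all_analysis.
Set Implicit Arguments. Unset Strict Implicit. Unset Printing Implicit Defensive.
Import Order.TTheory GRing.Theory Num.Theory.
Local Open Scope classical_set_scope.
Local Open Scope ring_scope.

(* Functions (0,oo) -> (0,oo) are represented as total functions R -> R;
   only their values on (0,oo) matter. *)

Definition concave_on_from {R : realType} (r : R) (f : R -> R) : Prop :=
  forall x y t : R, r < x -> r < y -> 0 <= t -> t <= 1 ->
    t * f x + (1 - t) * f y <= f (t * x + (1 - t) * y).

Definition bounded_on {R : realType} (A : set R) (f : R -> R) : Prop :=
  exists M : R, forall x, A x -> `|f x| <= M.

Definition in_B {R : realType} (psi : R -> R) : Prop :=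
  measurable_fun (`]0, +oo[ : set R) psi /\
  (forall x : R, 0 < x -> 0 < psi x) /\
  (forall a b : R, 0 < a -> bounded_on `[a, b] psi) /\
  (forall r : R, 0 < r -> bounded_on `[r, +oo[ (fun x => (psi x)^-1)).

Definition pseudoconcave_on {R : realType} (r : R) (psi : R -> R) : Prop :=
  exists psi1 : R -> R,
    (forall x, r < x -> 0 < psi1 x) /\
    concave_on_from r psi1 /\
    bounded_on `]r, +oo[ (fun x => psi x / psi1 x) /\
    bounded_on `]r, +oo[ (fun x => psi1 x / psi x).

Definition pseudoconcave_near_pinfty {R : realType} (psi : R -> R) : Prop :=
  exists r : R, 0 <= r /\ pseudoconcave_on r psi.

(* Main.v *)
Require Import Defs.
From HB Require Import structures.
From mathcomp Require Import all_boot all_order all_algebra.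
From mathcomp Require Import all_classical all_reals all_analysis.
From mathcomp Require Import ring lra.
Import Order.TTheory GRing.Theory Num.Theory.
Local Open Scope classical_set_scope.
Local Open Scope ring_scope.

Ltac nz := rewrite ?gt_eqF //; lra.
Ltac fld := field; repeat (apply/andP; split); nz.

Lemma chord (R : realType) (r : R) (f : R -> R) a y z :
  concave_on_from r f -> r < a -> a <= y -> y <= z -> a < z ->
  (z - y) / (z - a) * f a + (y - a) / (z - a) * f z <= f y.
Proof.
move=> hc ra ay yz az.
have za : z - a != 0 by rewrite subr_eq0 gt_eqF.
have zapos : 0 < z - a by rewrite subr_gt0.
set t := (z - y) / (z - a).
have t0 : 0 <= t by rewrite /t; apply: divr_ge0; lra.
have t1 : t <= 1 by rewrite /t ler_pdivrMr // mul1r; lra.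
have h := hc a z t ra (lt_trans ra az) t0 t1.
have e1 : 1 - t = (y - a) / (z - a) by rewrite /t; field.
have e2 : t * a + (1 - t) * z = y by rewrite /t; field.
by rewrite e2 e1 in h.
Qed.

Lemma ratio_le (R : realType) (p P q Q : R) :
  0 <= p -> p <= P -> 0 < Q -> Q <= q -> p / q <= P / Q.
Proof.
move=> p0 pP Q0 Qq.
have q0 : 0 < q by apply: lt_le_trans Qq.
apply: ler_pM => //; first by rewrite invr_ge0 ltW.
by rewrite lef_pV2 // posrE.
Qed.

Arguments ratio_le {R p P q Q}.
Lemma addr_up (R : numDomainType) (x y : R) : 0 <= y -> x <= x + y.
Proof. by move=> h; rewrite lerDl. Qed.
Lemma addl_up (R : numDomainType) (x y : R) : 0 <= y -> x <= y + x.
Proof. by move=> h; rewrite lerDr. Qed.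

Theorem proposition4 (R : realType) (psi : R -> R) :
  in_B psi -> pseudoconcave_near_pinfty psi ->
  exists psi0 : R -> R,
    (forall x : R, 0 < x -> 0 < psi0 x) /\
    concave_on_from 0 psi0 /\
    (forall eps : R, 0 < eps ->
       bounded_on `]eps, +oo[ (fun x => psi x / psi0 x) /\
       bounded_on `]eps, +oo[ (fun x => psi0 x / psi x)).
Proof.
move=> [_ [psipos [psibd psiinvbd]]] [r [r0 [f [fpos [fconc [[M1 HM1] [M2 HM2]]]]]]].
pose s := r + 1.
have sE : s = r + 1 by [].
clearbody s.
have fs0 : 0 < f s by apply: fpos; lra.
exists (fun x => f (x + s)).
split; first by move=> x x0; apply: fpos; lra.
split.
  move=> x y t hx hy t0 t1.
  have := fconc (x + s) (y + s) t ltac:(lra) ltac:(lra) t0 t1.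
  by have -> : t * (x + s) + (1 - t) * (y + s) = t * x + (1 - t) * y + s by ring.
move=> eps eps0; split.
- have [B1 HB1] := psibd eps r eps0.
  exists (`|M1| * 2 + `|B1| * (r + 1) / f s) => x.
  rewrite /= in_itv /= andbT => hx.
  have x0 : 0 < x by lra.
  have px : 0 < psi x := psipos x x0.
  have fxs : 0 < f (x + s) by apply: fpos; lra.
  rewrite ger0_norm; last by rewrite divr_ge0 // ltW.
  have hA : 0 <= `|M1| * 2 by rewrite mulr_ge0.
  have hB : 0 <= `|B1| * (r + 1) / f s by rewrite divr_ge0 ?mulr_ge0 // ltW //; lra.
  case: (leP x r) => hxr.
  + rewrite -[X in X <= _]add0r; apply: lerD => //.
    have hb : psi x <= `|B1|.
      apply: (le_trans (ler_norm (psi x))).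
      apply: (le_trans _ (ler_norm B1)).
      apply: HB1; rewrite /= in_itv /= (ltW hx) hxr //.
    have hc := @chord R r f (s) (x + s) (s + (r + 1)) fconc
      ltac:(lra) ltac:(lra) ltac:(lra) ltac:(lra).
    have fz0 : 0 < f (s + (r + 1)) by apply: fpos; lra.
    have h1 : f s / (r + 1) <= f (x + s).
      apply: le_trans _ hc.
      rewrite -[X in X <= _]addr0; apply: lerD; last by apply: mulr_ge0; [apply: divr_ge0 | apply: ltW]; lra.
      have -> : s + (r + 1) - (x + s) = r + 1 - x by ring.
      have -> : s + (r + 1) - s = r + 1 by ring.
      rewrite [X in _ <= X]mulrAC ler_pM2r; last by rewrite invr_gt0; lra.
      rewrite -[X in X <= _]mul1r ler_pM2r //; lra.
    apply: le_trans (ratio_le (ltW px) hb _ h1) _.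
      by rewrite divr_gt0 //; lra.
    by rewrite le_eqVlt; apply/orP; left; apply/eqP; fld.
  + rewrite -[X in X <= _]addr0; apply: lerD => //.
    have hc := @chord R r f (x) (x + s) (x + s + s) fconc
      hxr ltac:(lra) ltac:(lra) ltac:(lra).
    have fx0 : 0 < f x by apply: fpos.
    have fz0 : 0 < f (x + s + s) by apply: fpos; lra.
    have h1 : f x / 2 <= f (x + s).
      apply: le_trans _ hc.
      rewrite -[X in X <= _]addr0; apply: lerD; last by apply: mulr_ge0; [apply: divr_ge0 | apply: ltW]; lra.
      have -> : (x + s + s - (x + s)) / (x + s + s - x) = 2^-1.
        by fld.
      by rewrite mulrC.
    apply: le_trans (ratio_le (ltW px) (lexx _) _ h1) _.
      by rewrite divr_gt0.
    have hM : psi x / f x <= `|M1|.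
      apply: (le_trans (ler_norm (psi x / f x))).
      apply: (le_trans _ (ler_norm M1)).
      by apply: HM1; rewrite /= in_itv /= hxr.
    have -> : psi x / (f x / 2) = 2 * (psi x / f x).
      by fld.
    by rewrite mulrC ler_pM2r.
- have [B2 HB2] := psiinvbd eps eps0.
  exists (`|M2| * 2 + f s * (4 * r + 5) * `|B2|) => x.
  rewrite /= in_itv /= andbT => hx.
  have x0 : 0 < x by lra.
  have px : 0 < psi x := psipos x x0.
  have fxs : 0 < f (x + s) by apply: fpos; lra.
  rewrite ger0_norm; last by rewrite divr_ge0 // ltW.
  have hA : 0 <= `|M2| * 2 by rewrite mulr_ge0.
  have hB : 0 <= f s * (4 * r + 5) * `|B2| by apply: mulr_ge0; [apply: mulr_ge0; [exact: ltW | lra] | exact: normr_ge0].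
  case: (leP x (2 * s)) => hxr.
  + rewrite -[X in X <= _]add0r; apply: lerD => //.
    have hb : (psi x)^-1 <= `|B2|.
      apply: (le_trans (ler_norm ((psi x)^-1))).
      apply: (le_trans _ (ler_norm B2)).
      by apply: HB2; rewrite /= in_itv /= andbT (ltW hx).
    have hc := @chord R r f (r + 2^-1) (s) (x + s) fconc
      ltac:(lra) ltac:(lra) ltac:(lra) ltac:(lra).
    have fa0 : 0 < f (r + 2^-1) by apply: fpos; lra.
    have h1 : f (x + s) <= f s * (4 * r + 5).
      have h2 : (s - (r + 2^-1)) / (x + s - (r + 2^-1)) * f (x + s) <= f s.
        apply: le_trans _ hc.
        rewrite -[X in X <= _]add0r; apply: lerD; first by apply: mulr_ge0; [apply: divr_ge0 | apply: ltW]; lra.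
        done.
      have e : (s - (r + 2^-1)) / (x + s - (r + 2^-1)) = (2 * x + 1)^-1 by rewrite sE; fld.
      rewrite e in h2.
      rewrite mulrC ler_pdivrMr in h2; last by lra.
      apply: le_trans h2 _.
      rewrite ler_pM2l //; lra.
    rewrite mulrC [X in _ <= X]mulrC.
    apply: ler_pM => //; [by rewrite invr_ge0 ltW | exact: ltW].
  + rewrite -[X in X <= _]addr0; apply: lerD => //.
    have hc := @chord R r f (s) (x) (x + s) fconc
      ltac:(lra) ltac:(lra) ltac:(lra) ltac:(lra).
    have hxr' : r < x by lra.
    have fx0 : 0 < f x by apply: fpos.
    have h1 : f (x + s) <= 2 * f x.
      have h2 : (x - s) / (x + s - s) * f (x + s) <= f x.
        apply: le_trans _ hc.
        rewrite -[X in X <= _]add0r; apply: lerD; first by apply: mulr_ge0; [apply: divr_ge0 | apply: ltW]; lra.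
        done.
      have h3 : 2^-1 <= (x - s) / (x + s - s).
        rewrite ler_pdivlMr; last by lra.
        lra.
      have h4 : 2^-1 * f (x + s) <= f x.
        apply: (le_trans _ h2); rewrite ler_pM2r //.
      clear -h4; lra.
    apply: le_trans (ratio_le (ltW fxs) h1 px (lexx _)) _.
    have hM : f x / psi x <= `|M2|.
      apply: (le_trans (ler_norm (f x / psi x))).
      apply: (le_trans _ (ler_norm M2)).
      by apply: HM2; rewrite /= in_itv /= hxr'.
    rewrite -mulrA mulrC; apply: ler_wpM2r => //; lra.
Qed.
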